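(* Let $\Omega:S^1\to\mathbb{R}$ be of class $C^{m-1}(S^1)$ for some integer $m\ge2$, such that $\Omega'(\theta)+1>0$ for all $\theta$. Then there exist constants $\epsilon_0>0$ and $\mu>0$ such that whenever $0<\epsilon<\epsilon_0$, \[ \left|e^{-iE_m\Omega(r,\theta)}\right|\le r^{1-\mu}\quad\text{for all }\theta\text{ and }1\le r\le2^\epsilon, \qquad \left|e^{iE_m\Omega(r,\theta)}\right|\le r^{\mu-1}\quad\text{for all }\theta\text{ and }2^{-\epsilon}\le r\le1. \]
   Context: For a $C^{m-1}$ function $f$ on the circle, $E_mf(r,\theta)=\sum_{p=0}^{m-1}\frac{f^{(p)}(\theta)}{p!}(-i\log r)^p$ for $r>0$, $\theta\in S^1$. *)

(* Defs.v *)
From Stdlib Require Import Reals Arith.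
From Coquelicot Require Import Coquelicot.
Open Scope R_scope.

Definition Cexp (z : C) : C :=
  (exp (Re z) * cos (Im z), exp (Re z) * sin (Im z)).

(* Functions on the circle S^1 = R / 2piZ are 2pi-periodic functions on R. *)
Definition circle_fun (f : R -> R) : Prop := forall x, f (x + 2 * PI) = f x.

Definition Ck (k : nat) (f : R -> R) : Prop :=
  (forall n, (n < k)%nat -> forall x, ex_derive (Derive_n f n) x) /\
  (forall n, (n <= k)%nat -> forall x, continuous (Derive_n f n) x).

Definition Em (m : nat) (f : R -> R) (r theta : R) : C :=
  sum_n (fun p => Cmult (RtoC (Derive_n f p theta / INR (Factorial.fact p)))
                        (Cpow (Cmult (Copp Ci) (RtoC (ln r))) p)) (m - 1).

(* Main.v *)
Require Import Defs.
From Stdlib Require Import Reals Lra Lia ZArith.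
From Coquelicot Require Import Coquelicot.
Open Scope R_scope.

Lemma Derive_shift (f : R -> R) (c x : R) :
  Derive (fun y => f (y + c)) x = Derive f (x + c).
Proof.
  unfold Derive. f_equal. apply Lim_ext. intros h.
  replace (x + h + c) with (x + c + h) by ring. reflexivity.
Qed.

Lemma Derive_n_periodic (f : R -> R) :
  circle_fun f -> forall n x, Derive_n f n (x + 2 * PI) = Derive_n f n x.
Proof.
  intros H n. induction n as [|n IH]; intros x.
  - simpl. apply H.
  - simpl. rewrite <- Derive_shift. apply Derive_ext. intros t. apply IH.
Qed.

Lemma periodic_nat (g : R -> R) :
  (forall x, g (x + 2 * PI) = g x) -> forall n y, g (y + 2 * PI * INR n) = g y.
Proof.
  intros H n. induction n as [|n IH]; intros y.
  - simpl. f_equal. ring.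
  - rewrite S_INR. replace (y + 2 * PI * (INR n + 1)) with ((y + 2 * PI * INR n) + 2 * PI) by ring.
    rewrite H. apply IH.
Qed.

Lemma periodic_Z (g : R -> R) :
  (forall x, g (x + 2 * PI) = g x) -> forall z y, g (y + 2 * PI * IZR z) = g y.
Proof.
  intros H z y. destruct z as [|p|p].
  - f_equal. simpl. ring.
  - rewrite <- (positive_nat_Z p), <- INR_IZR_INZ. apply periodic_nat; auto.
  - replace (IZR (Z.neg p)) with (- INR (Pos.to_nat p)).
    + rewrite <- (periodic_nat g H (Pos.to_nat p) (y + 2 * PI * - INR (Pos.to_nat p))).
      f_equal. ring.
    + rewrite <- Pos2Z.opp_pos, opp_IZR, <- (positive_nat_Z p), <- INR_IZR_INZ. reflexivity.
Qed.

Lemma periodic_reduce (g : R -> R) :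
  (forall x, g (x + 2 * PI) = g x) -> forall x, exists y, 0 <= y <= 2 * PI /\ g x = g y.
Proof.
  intros H x. pose proof PI_RGT_0 as HPI.
  destruct (base_Int_part (x / (2 * PI))) as [H1 H2].
  set (k := Int_part (x / (2 * PI))) in *.
  exists (x - 2 * PI * IZR k). split.
  - assert (Hk1 : 2 * PI * IZR k <= x).
    { apply Rmult_le_compat_l with (r := 2 * PI) in H1; [|lra].
      replace (2 * PI * (x / (2 * PI))) with x in H1 by (field; lra). lra. }
    assert (Hk2 : x < 2 * PI * IZR k + 2 * PI).
    { assert (x / (2 * PI) < IZR k + 1) by lra.
      apply Rmult_lt_compat_l with (r := 2 * PI) in H0; [|lra].
      replace (2 * PI * (x / (2 * PI))) with x in H0 by (field; lra). lra. }
    lra.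
  - rewrite <- (periodic_Z g H k (x - 2 * PI * IZR k)). f_equal. ring.
Qed.

Lemma cont_pt (g : R -> R) x : continuous g x -> continuity_pt g x.
Proof. intros H. apply continuity_pt_filterlim. exact H. Qed.

Lemma periodic_bounded (g : R -> R) :
  (forall x, g (x + 2 * PI) = g x) -> (forall x, continuous g x) ->
  exists A, 0 <= A /\ forall x, Rabs (g x) <= A.
Proof.
  intros H Hc. pose proof PI_RGT_0 as HPI.
  destruct (continuity_ab_maj g 0 (2 * PI)) as [M [HM _]]; [lra| intros; apply cont_pt; auto |].
  destruct (continuity_ab_min g 0 (2 * PI)) as [mi [Hm _]]; [lra| intros; apply cont_pt; auto |].
  exists (Rmax (Rabs (g M)) (Rabs (g mi))). split.
  - eapply Rle_trans; [apply Rabs_pos| apply Rmax_l].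
  - intros x. destruct (periodic_reduce g H x) as [y [Hy ->]].
    specialize (HM y Hy). specialize (Hm y Hy).
    unfold Rabs at 1. destruct (Rcase_abs (g y)).
    + eapply Rle_trans; [|apply Rmax_r]. unfold Rabs; destruct (Rcase_abs (g mi)); lra.
    + eapply Rle_trans; [|apply Rmax_l]. unfold Rabs; destruct (Rcase_abs (g M)); lra.
Qed.

Lemma periodic_min (g : R -> R) :
  (forall x, g (x + 2 * PI) = g x) -> (forall x, continuous g x) ->
  exists x0, forall x, g x0 <= g x.
Proof.
  intros H Hc. pose proof PI_RGT_0 as HPI.
  destruct (continuity_ab_min g 0 (2 * PI)) as [mi [Hm _]]; [lra| intros; apply cont_pt; auto |].
  exists mi. intros x. destruct (periodic_reduce g H x) as [y [Hy ->]]. auto.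
Qed.

Lemma Cmod_Cexp z : Cmod (Cexp z) = exp (Re z).
Proof.
  unfold Cexp, Cmod; cbn [fst snd].
  replace ((exp (Re z) * cos (Im z)) ^ 2 + (exp (Re z) * sin (Im z)) ^ 2)
    with (exp (Re z) ^ 2 * ((sin (Im z))² + (cos (Im z))²)) by (unfold Rsqr; ring).
  rewrite sin2_cos2, Rmult_1_r. apply sqrt_pow2. left; apply exp_pos.
Qed.

Lemma exp_le_mono a b : a <= b -> exp a <= exp b.
Proof. intros [H|H]; [left; apply exp_increasing; auto| subst; lra]. Qed.

Lemma pow_le_one_abs L n : Rabs L <= 1 -> Rabs L ^ n <= 1.
Proof.
  intros H. induction n; simpl; [lra|].
  pose proof (Rabs_pos L). pose proof (pow_le (Rabs L) n H0). nra.
Qed.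

Definition term (a : nat -> R) (L : R) (p : nat) : C :=
  Cmult (RtoC (a p)) (Cpow (Cmult (Copp Ci) (RtoC L)) p).

Lemma Im_plus (u v : C) : Im (plus u v) = Im u + Im v.
Proof. reflexivity. Qed.

Lemma term_bound a L A p : Rabs L <= 1 -> Rabs (a (S (S p))) <= A ->
  Rabs (Im (term a L (S (S p)))) <= A * L ^ 2.
Proof.
  intros HL HA. eapply Rle_trans; [| ].
  - eapply Rle_trans; [| apply (Rmax_Cmod (term a L (S (S p))))]. apply Rmax_r.
  - unfold term. rewrite Cmod_mult, Cmod_pow, Cmod_mult, Cmod_opp, Cmod_Ci, !Cmod_R.
    rewrite Rmult_1_l.
    replace (Rabs L ^ S (S p)) with (L ^ 2 * Rabs L ^ p)
      by (rewrite <- pow2_abs; simpl; ring).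
    pose proof (pow_le_one_abs L p HL). pose proof (pow_le (Rabs L) p (Rabs_pos L)).
    pose proof HA as H1. pose proof (Rabs_pos (a (S (S p)))).
    pose proof (pow2_ge_0 L). assert (0 <= (A - Rabs (a (S (S p)))) * L ^ 2) by (apply Rmult_le_pos; lra). assert (0 <= Rabs (a (S (S p))) * L ^ 2 * (1 - Rabs L ^ p)) by (apply Rmult_le_pos; [apply Rmult_le_pos|]; lra). nra.
Qed.

Lemma sum_bound a L A n : Rabs L <= 1 -> (forall p, (p <= S n)%nat -> Rabs (a p) <= A) ->
  Rabs (Im (sum_n (term a L) (S n)) + a 1%nat * L) <= INR (S n) * A * L ^ 2.
Proof.
  intros HL HA. assert (0 <= A) by (eapply Rle_trans; [apply Rabs_pos| apply (HA O); lia]).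
  induction n.
  - rewrite sum_Sn, sum_O, Im_plus. unfold term. simpl.
    match goal with |- Rabs ?e <= _ => replace e with 0 by ring end.
    rewrite Rabs_R0. pose proof (pow2_ge_0 L). simpl in *. nra.
  - rewrite sum_Sn, Im_plus.
    pose proof (term_bound a L A n HL (HA _ (le_n _))).
    assert (IH := IHn (fun p Hp => HA p ltac:(lia))).
    replace (Im (sum_n (term a L) (S n)) + Im (term a L (S (S n))) + a 1%nat * L)
      with ((Im (sum_n (term a L) (S n)) + a 1%nat * L) + Im (term a L (S (S n)))) by ring.
    eapply Rle_trans; [apply Rabs_triang|]. rewrite (S_INR (S n)). lra.
Qed.

Lemma Rabs_le_inv x y : Rabs x <= y -> - y <= x <= y.
Proof. intros H. pose proof (Rle_abs x). pose proof (Rle_abs (- x)). rewrite Rabs_Ropp in H1. lra. Qed.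

Lemma Re_mI z : Re (Cmult (Copp Ci) z) = Im z.
Proof. destruct z; unfold Cmult, Copp, Ci, Re, Im; simpl; ring. Qed.

Lemma Re_I z : Re (Cmult Ci z) = - Im z.
Proof. destruct z; unfold Cmult, Ci, Re, Im; simpl; ring. Qed.

Lemma ln2_bounds : 0 < ln 2 < 1.
Proof.
  split.
  - rewrite <- ln_1. apply ln_increasing; lra.
  - apply Rlt_le_trans with (ln (exp 1)); [|rewrite ln_exp; lra]. apply ln_increasing; [lra|].
    pose proof (exp_ineq1 1 ltac:(lra)). lra.
Qed.

Theorem lemma4p8 (m : nat) (Omega : R -> R) :
  (2 <= m)%nat ->
  circle_fun Omega ->
  Ck (m - 1) Omega ->
  (forall theta, Derive Omega theta + 1 > 0) ->
  exists eps0 mu : R, eps0 > 0 /\ mu > 0 /\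
    forall eps, 0 < eps < eps0 ->
      (forall theta r, 1 <= r <= Rpower 2 eps ->
         Cmod (Cexp (Cmult (Copp Ci) (Em m Omega r theta))) <= Rpower r (1 - mu)) /\
      (forall theta r, Rpower 2 (- eps) <= r <= 1 ->
         Cmod (Cexp (Cmult Ci (Em m Omega r theta))) <= Rpower r (mu - 1)).
Proof.
  intros Hm Hcirc [_ Hcont] Hpos.
  destruct m as [|[|k]]; [lia|lia|].
  simpl (S (S k) - 1)%nat in Hcont.
  pose proof (Derive_n_periodic Omega Hcirc) as Hper.
  assert (HA : forall N, (N <= S k)%nat -> exists A, 0 <= A /\
            forall p x, (p <= N)%nat -> Rabs (Derive_n Omega p x) <= A).
  { induction N as [|N IH]; intros HN.
    - destruct (periodic_bounded (Derive_n Omega 0) (Hper 0%nat) (Hcont 0%nat ltac:(lia)))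
        as [A [HA0 HA]].
      exists A; split; auto. intros p x Hp. replace p with 0%nat by lia. auto.
    - destruct (IH ltac:(lia)) as [A1 [HA1 HA1b]].
      destruct (periodic_bounded (Derive_n Omega (S N)) (Hper (S N)) (Hcont (S N) HN))
        as [A2 [HA2 HA2b]].
      exists (Rmax A1 A2). split; [eapply Rle_trans; [apply HA1| apply Rmax_l]|].
      intros p x Hp. destruct (Nat.eq_dec p (S N)) as [->|Hne].
      + eapply Rle_trans; [apply HA2b| apply Rmax_r].
      + eapply Rle_trans; [apply HA1b; lia| apply Rmax_l]. }
  destruct (HA (S k) (le_n _)) as [A [HA0 HAb]].
  destruct (periodic_min (Derive_n Omega 1) (Hper 1%nat) (Hcont 1%nat ltac:(lia))) as [x0 Hx0].
  set (delta := Derive Omega x0 + 1).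
  assert (Hdelta : delta > 0) by apply Hpos.
  assert (Hd : forall theta, Derive Omega theta >= delta - 1).
  { intros theta. specialize (Hx0 theta). change (Derive Omega x0 <= Derive Omega theta) in Hx0. unfold delta. lra. }
  set (K := INR (S k) * A).
  assert (HK : 0 <= K) by (apply Rmult_le_pos; [apply pos_INR| auto]).
  set (eps0 := Rmin 1 (delta / (2 * (K + 1)))).
  assert (He0 : 0 < eps0).
  { apply Rmin_pos; [lra|]. apply Rdiv_lt_0_compat; lra. }
  assert (He1 : eps0 <= 1) by apply Rmin_l.
  assert (HKe : K * eps0 <= delta / 2).
  { assert (eps0 <= delta / (2 * (K + 1))) by apply Rmin_r.
    apply Rle_trans with (K * (delta / (2 * (K + 1)))).
    - apply Rmult_le_compat_l; auto.
    - apply Rmult_le_reg_r with (2 * (K + 1)); [lra|].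
      field_simplify; [|lra]. nra. }
  pose proof ln2_bounds as Hln2.
  assert (Key : forall theta L, Rabs L <= 1 ->
    Rabs (Im (sum_n (term (fun p => Derive_n Omega p theta / INR (Factorial.fact p)) L) (S k))
          + Derive Omega theta * L) <= K * L ^ 2).
  { intros theta L HL.
    pose proof (sum_bound (fun p => Derive_n Omega p theta / INR (Factorial.fact p)) L A k HL)
      as HS.
    replace (Derive Omega theta) with (Derive_n Omega 1 theta / INR (Factorial.fact 1))
      by (change (Derive_n Omega 1 theta) with (Derive Omega theta); replace (INR (Factorial.fact 1)) with 1 by (simpl; reflexivity); field).
    apply HS. intros p Hp.
    unfold Rdiv. rewrite Rabs_mult, Rabs_inv.
    pose proof (INR_fact_lt_0 p).
    assert (1 <= INR (Factorial.fact p)).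
    { apply (le_INR 1). pose proof (Factorial.lt_O_fact p). lia. }
    rewrite (Rabs_right (INR _)) by lra.
    pose proof (HAb p theta Hp). pose proof (Rabs_pos (Derive_n Omega p theta)).
    apply Rle_trans with (Rabs (Derive_n Omega p theta) * 1); [|lra].
    apply Rmult_le_compat_l; auto.
    rewrite <- Rinv_1. apply Rinv_le_contravar; lra. }
  exists eps0, (delta / 2). split; [lra|]. split; [lra|].
  intros eps Heps. split.
  - intros theta r Hr.
    assert (Hr0 : 0 < r) by lra.
    assert (HL0 : 0 <= ln r) by (rewrite <- ln_1; apply ln_le; lra).
    assert (HL1 : ln r <= eps * ln 2).
    { rewrite <- ln_Rpower. apply ln_le; lra. }
    assert (HLe : ln r <= eps0) by nra.
    specialize (Key theta (ln r) ltac:(rewrite Rabs_right; lra)).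
    specialize (Hd theta).
    change (Em (S (S k)) Omega r theta) with
      (sum_n (term (fun p => Derive_n Omega p theta / INR (Factorial.fact p)) (ln r)) (S k)).
    rewrite Cmod_Cexp, Re_mI. unfold Rpower. apply exp_le_mono.
    set (I := Im _) in *. set (L := ln r) in *. set (d := Derive Omega theta) in *.
    apply Rabs_le_inv in Key.
    assert (K * L <= delta / 2) by nra.
    assert (K * L ^ 2 <= delta / 2 * L) by nra.
    assert ((d - (delta - 1)) * L >= 0) by nra.
    nra.
  - intros theta r Hr.
    assert (Hr0 : 0 < r) by (pose proof (exp_pos (- eps * ln 2)); unfold Rpower in Hr; lra).
    assert (HL0 : ln r <= 0) by (rewrite <- ln_1; apply ln_le; lra).
    assert (HL1 : - eps * ln 2 <= ln r).
    { rewrite <- ln_Rpower. apply ln_le; [apply exp_pos| lra]. }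
    assert (HLe : - eps0 <= ln r) by nra.
    specialize (Key theta (ln r) ltac:(rewrite Rabs_left1; lra)).
    specialize (Hd theta).
    change (Em (S (S k)) Omega r theta) with
      (sum_n (term (fun p => Derive_n Omega p theta / INR (Factorial.fact p)) (ln r)) (S k)).
    rewrite Cmod_Cexp, Re_I. unfold Rpower. apply exp_le_mono.
    set (I := Im _) in *. set (L := ln r) in *. set (d := Derive Omega theta) in *.
    apply Rabs_le_inv in Key.
    assert (- K * L <= delta / 2) by nra.
    assert (K * L ^ 2 <= - delta / 2 * L) by nra.
    assert ((d - (delta - 1)) * L <= 0) by nra.
    nra.
Qed.
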